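(* Let $G$ be a graph, $B$ a hopping forcing set of $G$, and $\mathcal F$ a set of hopping forces of $B$ arising from a chronological list that colors all of $V(G)$ blue, and let $t=\operatorname{pt}_{\operatorname{H}}(G;\mathcal F)$. Then for every $i\in\{0,\ldots,t\}$, $$\mathcal F^{(t-i)}\subseteq \operatorname{Term}(\mathcal F)^{[i]},$$ where $\mathcal F^{(j)}$ is computed for the process starting from $B$ with forces $\mathcal F$, and $\operatorname{Term}(\mathcal F)^{[i]}$ is computed for the process starting from $\operatorname{Term}(\mathcal F)$ with forces $\operatorname{Rev}(\mathcal F)$.
   Context: All graphs are finite, simple and undirected. Hopping color change rule: a blue vertex $v$ may force a white vertex $w$ to become blue if $v$ has not previously performed a force and every neighbor of $v$ is blue. For an initial blue set $B$, a chronological list of forces of $B$ is a sequence of such forces applied one at a time until no further force is possible; its underlying unordered set is a set of forces of $B$. $B$ is a hopping forcing set if some chronological list of forces of $B$ turns all vertices blue. For an initial set $S$ and a set of forces $\mathcal E$ of $S$, let $\mathcal E^{(0)}=S$ and for $j\geq1$ let $\mathcal E^{(j)}$ be the set of vertices $w\notin U_{j-1}:=\bigcup_{i=0}^{j-1}\mathcal E^{(i)}$ for which there is $(v\to w)\in\mathcal E$ with $v\in U_{j-1}$ and all neighbors of $v$ in $U_{j-1}$; write $S^{[i]}=\bigcup_{j=0}^{i}\mathcal E^{(j)}$. $\operatorname{pt}_{\operatorname{H}}(G;\mathcal E)$ is the least $j$ with $S^{[j]}=V(G)$. $\operatorname{Rev}(\mathcal F)=\{w\to v:(v\to w)\in\mathcal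 F\}$ and $\operatorname{Term}(\mathcal F)$ is the set of vertices of $G$ performing no force in $\mathcal F$; $\operatorname{Rev}(\mathcal F)$ is a valid set of hopping forces of $\operatorname{Term}(\mathcal F)$. *)

(* Defs.v *)
From mathcomp Require Import all_boot.
Set Implicit Arguments. Unset Strict Implicit. Unset Printing Implicit Defensive.

(* Graph: vertex type T : finType, adjacency e : rel T (symmetric, irreflexive).
   A force v -> w is the pair (v, w) : T * T. *)
Section Hopping.
Variable T : finType.
Variable e : rel T.

Definition nbhd (v : T) : {set T} := [set u | e v u].

(* Hopping color change rule: with current blue set Bl and set [used] of
   vertices that have already forced, v may force w. *)
Definition can_force (Bl used : {set T}) (v w : T) : bool :=
  [&& v \in Bl, v \notin used, nbhd v \subset Bl & w \notin Bl].

Fixpoint chron_ok (Bl used : {set T}) (L : seq (T * T)) : bool :=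
  if L is p :: L' then
    can_force Bl used p.1 p.2 && chron_ok (p.2 |: Bl) (p.1 |: used) L'
  else true.

Definition final_blue (B : {set T}) (L : seq (T * T)) : {set T} :=
  B :|: [set x | x \in map snd L].

Definition forcers (L : seq (T * T)) : {set T} := [set x | x \in map fst L].

Definition chron_list (B : {set T}) (L : seq (T * T)) : bool :=
  chron_ok B set0 L &&
  [forall v, forall w, ~~ can_force (final_blue B L) (forcers L) v w].

Definition forces_of_list (L : seq (T * T)) : {set T * T} := [set p in L].

Definition hopping_forcing_set (B : {set T}) : Prop :=
  exists L, chron_list B L /\ final_blue B L = [set: T].

(* Time-step process: U_j = \bigcup_{i<=j} E^(i), i.e. S^[j]. *)
Definition hstep (E : {set T * T}) (U : {set T}) : {set T} :=
  U :|: [set w | (w \notin U) &&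
                 [exists v, [&& (v, w) \in E, v \in U & nbhd v \subset U]]].

Fixpoint upto (S : {set T}) (E : {set T * T}) (j : nat) : {set T} :=
  if j is j'.+1 then hstep E (upto S E j') else S.

Definition layer (S : {set T}) (E : {set T * T}) (j : nat) : {set T} :=
  if j is j'.+1 then upto S E j :\: upto S E j' else S.

Definition is_pt (S : {set T}) (E : {set T * T}) (t : nat) : Prop :=
  upto S E t = [set: T] /\ forall j, j < t -> upto S E j <> [set: T].

Definition Rev (F : {set T * T}) : {set T * T} := [set (p.2, p.1) | p in F].

Definition Term (F : {set T * T}) : {set T} :=
  [set v | [forall p in F, p.1 != v]].

End Hopping.

(* Main.v *)
Require Import Defs.
From mathcomp Require Import all_boot.
From mathcomp Require Import zify.

Lemma upto_mono (T : finType) (e : rel T) S E j k :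
  j <= k -> upto e S E j \subset upto e S E k.
Proof.
move/subnK<-; elim: (k - j) => [|n IH] //=.
rewrite /hstep; apply: subset_trans IH _; exact: subsetUl.
Qed.

Lemma chron_facts (T : finType) (e : rel T) Bl used (L : seq (T * T)) :
  chron_ok e Bl used L ->
  (forall p, p \in L -> p.2 \notin Bl) /\
  (forall p q, p \in L -> q \in L -> p.2 = q.2 -> p = q).
Proof.
elim: L Bl used => [|a L IH] Bl used /=; first by split.
case/andP=> /and4P[_ _ _ a2] /IH [H1 H2]; split.
  move=> p; rewrite inE => /orP[/eqP->//|/H1]; rewrite inE negb_or; by case/andP.
move=> p q; rewrite !inE => /orP[/eqP->|pL] /orP[/eqP->|qL] //.
- move=> E; have := H1 q qL; by rewrite -E !inE eqxx.
- move=> E; have := H1 p pL; by rewrite E !inE eqxx.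
- exact: H2.
Qed.

Theorem lemma4p6 (T : finType) (e : rel T)
  (e_sym : symmetric e) (e_irr : irreflexive e)
  (B : {set T}) (L : seq (T * T))
  (HB : hopping_forcing_set e B)
  (HL : chron_list e B L) (Hall : final_blue B L = [set: T])
  (t : nat) (Ht : is_pt e B (forces_of_list L) t) :
  forall i, i <= t ->
    layer e B (forces_of_list L) (t - i)
      \subset upto e (Term (forces_of_list L)) (Rev (forces_of_list L)) i.
Proof.
set F := forces_of_list L.
set R := upto e (Term F) (Rev F).
have [Hnot Huniq] := @chron_facts T e B set0 L (proj1 (andP HL)).
have FL p : (p \in F) = (p \in L) by rewrite inE.
have ex v : exists j, v \in upto e B F j by exists t; rewrite Ht.1 inE.
pose tm v := ex_minn (ex v).
have tmP v : v \in upto e B F (tm v) /\ forall j, v \in upto e B F j -> tm v <= j.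
  rewrite /tm; case: ex_minnP => m Hm Hmin; by split.
have tmt v : tm v <= t by apply: (tmP v).2; rewrite Ht.1 inE.
have T1 x w : (x, w) \in F ->
  [/\ forall s, tm w = s.+1 -> x \in upto e B F s /\ nbhd e x \subset upto e B F s,
      tm x < tm w & forall u, e x u -> tm u < tm w].
  rewrite FL => xwL.
  have wB : w \notin B by exact: (Hnot _ xwL).
  have Hs : forall s, tm w = s.+1 -> x \in upto e B F s /\ nbhd e x \subset upto e B F s.
    move=> s Es.
    have [wU wmin] := tmP w.
    have wns : w \notin upto e B F s.
      apply/negP=> /wmin; by rewrite Es ltnn.
    move: wU; rewrite Es /= /hstep inE (negbTE wns) /= inE wns /=.
    case/existsP=> v /and3P[vwF vU vN].
    rewrite FL in vwF.
    have := Huniq _ _ vwF xwL erefl; case=> <-; by split.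
  have [s Es] : exists s, tm w = s.+1.
    case E0: (tm w) => [|s]; last by exists s.
    have := (tmP w).1; rewrite E0 /= => wB'; by rewrite wB' in wB.
  have [xU xN] := Hs s Es.
  split => //.
    by rewrite Es ltnS; apply: (tmP x).2.
  move=> u xu; rewrite Es ltnS; apply: (tmP u).2.
  apply: (subsetP xN); by rewrite inE.
have Rmono j k : j <= k -> R j \subset R k by exact: upto_mono.
have key : forall n x w, (x, w) \in F -> t - tm w < n -> x \in R (t - tm w).+1.
  elim=> [//|n IH] x w xwF Hn.
  have good : forall v, (forall y, (v, y) \in F -> tm w < tm y) -> v \in R (t - tm w).
    move=> v Hv.
    case vT: (v \in Term F).
      apply: (subsetP (Rmono 0 _ (leq0n _))); exact: vT.
    move: vT; rewrite inE => /negbT; rewrite negb_forall => /existsP [p].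
    rewrite negb_imply negbK => /andP [pF /eqP pv].
    have pF' : (v, p.2) \in F by rewrite -pv -surjective_pairing.
    have lt := Hv _ pF'.
    have Hx := IH _ _ pF'.
    have := tmt p.2; move=> tp.
    have hn : t - tm p.2 < n by lia.
    apply: (subsetP (Rmono _ _ _) _ (Hx hn)); lia.
  rewrite /= /hstep inE; case xR: (x \in R (t - tm w)) => //=.
  rewrite inE xR /=; apply/existsP; exists w.
  apply/and3P; split.
  - apply/imsetP; exists (x, w) => //.
  - apply: good => y wyF; by case: (T1 _ _ wyF).
  - apply/subsetP => u; rewrite inE => wu; apply: good => y uyF.
    case: (T1 _ _ uyF) => _ _; apply; by rewrite e_sym.
move=> i lei; apply/subsetP => x xl.
case xT: (x \in Term F).
  apply: (subsetP (Rmono 0 _ (leq0n _))); exact: xT.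
move: xT; rewrite inE => /negbT; rewrite negb_forall => /existsP [p].
rewrite negb_imply negbK => /andP [pF /eqP px].
have xwF : (x, p.2) \in F by rewrite -px -surjective_pairing.
have [Hs lt _] := T1 _ _ xwF.
have Hk := key (t - tm p.2).+1 _ _ xwF (ltnSn _).
apply: (subsetP (Rmono _ _ _)) Hk.
have : t - i < tm p.2.
  rewrite ltnNge; apply/negP => le.
  move: xl; case Eti: (t - i) => [|j].
    move: le; rewrite Eti leqn0 => /eqP E0; rewrite E0 in lt; by [].
  rewrite /layer inE => /andP [xnj _].
  case Es: (tm p.2) => [|s]; first by rewrite Es in lt.
  have [xs _] := Hs s Es.
  move: Es le; rewrite Eti => Es le.
  have : upto e B F s \subset upto e B F j by apply: upto_mono; rewrite -ltnS -Es.
  by move/subsetP/(_ _ xs); rewrite (negbTE xnj).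
move=> h; have := tmt p.2 => h2; lia.
Qed.
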